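(* Let $a_1,\ldots,a_{n+1}>0$, let $E=E(a_1,\ldots,a_n)\subset\mathbb{C}^n$, let $u=\sum_{j=1}^n\pi|z_j|^2/a_j$ on $\mathbb{C}^n$, and for $0<\varepsilon<1<\beta$ define $H_{\varepsilon,\beta}\colon E\to\mathbb{R}$ by $H_{\varepsilon,\beta}=\min\{a_{n+1}(\varepsilon+\beta u),\,a_{n+1}(1-u)\}$ and \[E^\circ_{H_{\varepsilon,\beta}}=\{(w,z)\in E\times\mathbb{C}\mid \pi|z|^2<H_{\varepsilon,\beta}(w)\}\subset\mathbb{C}^{n+1}.\] Then for any $0<\varepsilon<1<\beta$, $(E^\circ_{H_{\varepsilon,\beta}},\hat\lambda_0)$ is an open Liouville domain.
   Context: $E(a_1,\ldots,a_n)=\{(z_1,\ldots,z_n)\in\mathbb{C}^n\mid\sum_j\pi|z_j|^2/a_j\leq1\}$. $\hat\lambda_0=\frac12\sum_{j=1}^{n+1}(x_jdy_j-y_jdx_j)$ is the standard primitive on $\mathbb{C}^{n+1}$, $z_j=x_j+iy_j$. An open Liouville domain is a manifold without boundary $U$ with a 1-form $\lambda$ such that $d\lambda$ is symplectic, the flow $\mathcal{L}^t$ of the Liouville vector field $\mathcal{L}$ (defined by $d\lambda(\mathcal{L},\cdot)=\lambda$) exists on $U$ for all $t\leq0$, and $\mathcal{L}^t(U)$ has compact closure in $U$ for all $t<0$. *)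

(* Defs.v *)
From HB Require Import structures.
From mathcomp Require Import all_boot all_order all_algebra.
From mathcomp Require Import all_classical all_reals all_analysis.
Set Implicit Arguments. Unset Strict Implicit. Unset Printing Implicit Defensive.
Import Order.TTheory GRing.Theory Num.Theory.
Import numFieldNormedType.Exports.
Local Open Scope classical_set_scope.
Local Open Scope ring_scope.

(** Exterior derivative of a 1-form [lam] (lam p : covector at p), evaluated on
    constant vector fields v, w :  d lam (v,w) = v(lam(w)) - w(lam(v)). *)
Definition dform {R : realType} {V : normedModType R} (lam : V -> V -> R)
  (p v w : V) : R :=
  'D_v (fun q => lam q w) p - 'D_w (fun q => lam q v) p.

(** Open Liouville domain: U an open subset of the (finite-dimensional) vector
    space V (hence a manifold without boundary), lam a (differentiable) 1-form on U
    with d lam symplectic (nondegenerate; closedness is automatic), the Liouville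
    vector field L (d lam (L, .) = lam) has a flow defined on U for all t <= 0,
    and for t < 0 the image L^t(U) has compact closure contained in U. *)
Definition open_liouville_domain {R : realType} {V : normedModType R}
  (U : set V) (lam : V -> V -> R) : Prop :=
  [/\ open U,
      (forall p, U p -> forall (c : R) (v w : V),
          lam p (c *: v + w) = c * lam p v + lam p w),
      (forall p, U p -> forall w, differentiable (fun q => lam q w) p),
      (forall p, U p -> forall v, (forall w, dform lam p v w = 0) -> v = 0)
    & exists L : V -> V,
        (forall p, U p -> forall w, dform lam p (L p) w = lam p w) /\
        exists phi : R -> V -> V,
          (forall p, U p -> phi 0 p = p /\
             exists2 d : R, 0 < d & forall t : R, t < d ->
               U (phi t p) /\ is_derive t (1 : R) (fun s => phi s p) (L (phi t p))) /\
          (forall t : R, t < 0 ->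
             compact (closure (phi t @` U)) /\ closure (phi t @` U) `<=` U)].

(** C^{n+1} = R^{2n+2}: a point is (x, y) with z_j = x_j + i y_j, j : 'I_n.+1;
    the last coordinate (ord_max) is the extra C factor, the first n are w in C^n. *)
Definition Cn1 (R : realType) (n : nat) :=
  ('rV[R]_(n.+1) * 'rV[R]_(n.+1))%type.

Definition sqmod {R : realType} {n : nat} (p : Cn1 R n) (j : 'I_n.+1) : R :=
  p.1 ord0 j ^+ 2 + p.2 ord0 j ^+ 2.

Definition ufun {R : realType} {n : nat} (a : 'I_n.+1 -> R) (p : Cn1 R n) : R :=
  \sum_(j < n.+1 | (j < n)%N) pi * sqmod p j / a j.

Definition Hfun {R : realType} {n : nat} (a : 'I_n.+1 -> R) (eps beta : R)
  (p : Cn1 R n) : R :=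
  Num.min (a ord_max * (eps + beta * ufun a p)) (a ord_max * (1 - ufun a p)).

(** E^o_H = {(w,z) in E x C | pi|z|^2 < H(w)}, E = E(a_1..a_n) = {u <= 1}. *)
Definition EH {R : realType} {n : nat} (a : 'I_n.+1 -> R) (eps beta : R)
  : set (Cn1 R n) :=
  [set p | ufun a p <= 1 /\ pi * sqmod p ord_max < Hfun a eps beta p].

Definition lambda0 {R : realType} {n : nat} (p v : Cn1 R n) : R :=
  2^-1 * \sum_(j < n.+1) (p.1 ord0 j * v.2 ord0 j - p.2 ord0 j * v.1 ord0 j).

(* Main.v *)
Require Import Defs.
From HB Require Import structures.
From mathcomp Require Import all_boot all_order all_algebra.
From mathcomp Require Import all_classical all_reals all_analysis.
From mathcomp Require Import ring lra zify.
Import Order.TTheory GRing.Theory Num.Theory.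
Import numFieldNormedType.Exports.
Local Open Scope classical_set_scope.
Local Open Scope ring_scope.

Section S.
Variables (R : realType) (n : nat).
Local Notation V := (Cn1 R n).

Lemma fst_diff (p : V) : differentiable (fun q : V => q.1) p.
Proof.
have @f : {linear V -> 'rV[R]_n.+1}.
  by exists (fun q : V => q.1); do 2![eexists]; do ?[constructor] => //.
rewrite (_ : (fun _ => _) = f) //; apply/linear_differentiable => x.
exact: cvg_fst.
Qed.

Lemma snd_diff (p : V) : differentiable (fun q : V => q.2) p.
Proof.
have @f : {linear V -> 'rV[R]_n.+1}.
  by exists (fun q : V => q.2); do 2![eexists]; do ?[constructor] => //.
rewrite (_ : (fun _ => _) = f) //; apply/linear_differentiable => x.
exact: cvg_snd.
Qed.

Lemma c1_diff j (p : V) : differentiable (fun q : V => q.1 ord0 j) p.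
Proof.
apply: (@differentiable_comp _ _ _ _ (fun q : V => q.1) (fun N : 'rV[R]_n.+1 => N ord0 j)).
  exact: fst_diff.
exact: differentiable_coord.
Qed.
Lemma c2_diff j (p : V) : differentiable (fun q : V => q.2 ord0 j) p.
Proof.
apply: (@differentiable_comp _ _ _ _ (fun q : V => q.2) (fun N : 'rV[R]_n.+1 => N ord0 j)).
  exact: snd_diff.
exact: differentiable_coord.
Qed.
End S.

Section S.
Variables (R : realType) (n : nat).
Local Notation V := (Cn1 R n).

Lemma is_derive_affine {W : normedModType R} (f : W -> R) a v c :
  (forall h : R, f (h *: v + a) = f a + h * c) -> is_derive a v f c.
Proof.
move=> hf.
have H : (fun h : R => h^-1 *: ((f \o shift a) (h *: v) - f a)) @ 0^' --> c.
  apply: cvg_near_cst; near=> h.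
  have h0 : h != 0 by near: h; exact: nbhs_dnbhs_neq.
  by rewrite /= hf addrC addKr /GRing.scale /= mulKf.
split; [exact: (cvgP _ H) | exact: cvg_lim H].
Unshelve. all: by end_near.
Qed.

Lemma lam_linl (c : R) (v w x : V) :
  lambda0 (c *: v + w) x = c * lambda0 v x + lambda0 w x.
Proof.
rewrite /lambda0 mulrCA -mulrDr; congr (_ * _).
rewrite big_distrr -big_split /=; apply: eq_bigr => j _.
rewrite !mxE; ring.
Qed.

Lemma lam_linr (c : R) (v w x : V) :
  lambda0 x (c *: v + w) = c * lambda0 x v + lambda0 x w.
Proof.
rewrite /lambda0 mulrCA -mulrDr; congr (_ * _).
rewrite big_distrr -big_split /=; apply: eq_bigr => j _.
rewrite !mxE; ring.
Qed.

Lemma lam_anti (v w : V) : lambda0 w v = - lambda0 v w.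
Proof.
rewrite /lambda0 -mulrN; congr (_ * _).
rewrite -sumrN; apply: eq_bigr => j _; ring.
Qed.

Lemma lam_derive (p v w : V) : is_derive p v (fun q => lambda0 q w) (lambda0 v w).
Proof.
apply: is_derive_affine => h.
by rewrite lam_linl addrC.
Qed.

Lemma lam_diff (p w : V) : differentiable (fun q => lambda0 q w) p.
Proof.
rewrite /lambda0.
apply: differentiableM; first exact: differentiable_cst.
rewrite (_ : (fun q : V => _) = \sum_(j < n.+1) (fun q : V => q.1 ord0 j * w.2 ord0 j - q.2 ord0 j * w.1 ord0 j)); last first.
  by apply/funext => q; rewrite fct_sumE.
apply: differentiable_sum => j.
apply: differentiableB; apply: differentiableM; try exact: differentiable_cst.
  exact: c1_diff.
exact: c2_diff.
Qed.

Lemma dform_lam (p v w : V) : dform (@lambda0 R n) p v w = lambda0 v w - lambda0 w v.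
Proof.
rewrite /dform.
have [_ ->] := lam_derive p v w.
by have [_ ->] := lam_derive p w v.
Qed.
End S.

Section S.
Variables (R : realType) (n : nat).
Local Notation V := (Cn1 R n).

Lemma sqmodZ (s : R) (p : V) j : sqmod (s *: p) j = s ^+ 2 * sqmod p j.
Proof. rewrite /sqmod /= !mxE; ring. Qed.

Lemma ufunZ (a : 'I_n.+1 -> R) (s : R) (p : V) : ufun a (s *: p) = s ^+ 2 * ufun a p.
Proof.
rewrite /ufun big_distrr /=; apply: eq_bigr => j _; rewrite sqmodZ; ring.
Qed.

Lemma sqmod_ge0 (p : V) j : 0 <= sqmod p j.
Proof. by rewrite /sqmod addr_ge0 // sqr_ge0. Qed.

Lemma ufun_term (a : 'I_n.+1 -> R) (p : V) (j : 'I_n.+1) : (forall i, 0 < a i) -> (j < n)%N ->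
  pi * sqmod p j / a j <= ufun a p.
Proof.
move=> ha jn; rewrite /ufun (bigD1 j) //= lerDl.
apply: sumr_ge0 => i _; apply: divr_ge0; last exact: ltW.
by apply: mulr_ge0; [exact: pi_ge0 | exact: sqmod_ge0].
Qed.

Lemma ufun_ge0 (a : 'I_n.+1 -> R) (p : V) : (forall i, 0 < a i) -> 0 <= ufun a p.
Proof.
move=> ha; apply: sumr_ge0 => i _; apply: divr_ge0; last exact: ltW.
by apply: mulr_ge0; [exact: pi_ge0 | exact: sqmod_ge0].
Qed.

Lemma sqmod_diff (p : V) j : differentiable (fun q : V => sqmod q j) p.
Proof.
rewrite /sqmod.
rewrite (_ : (fun q : V => _) = (fun q : V => q.1 ord0 j * q.1 ord0 j + q.2 ord0 j * q.2 ord0 j)); last first.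
  by apply/funext => q; rewrite !expr2.
by apply: differentiableD; apply: differentiableM; (exact: c1_diff || exact: c2_diff).
Qed.

Lemma ufun_diff (a : 'I_n.+1 -> R) (p : V) : differentiable (ufun a) p.
Proof.
rewrite (_ : ufun a = \sum_(j < n.+1) (fun q : V => if (j < n)%N then pi * sqmod q j / a j else 0)); last first.
  by apply/funext => q; rewrite fct_sumE /ufun big_mkcond.
apply: differentiable_sum => j; case: (j < n)%N; last exact: differentiable_cst.
apply: differentiableM; last exact: differentiable_cst.
apply: differentiableM; first exact: differentiable_cst.
exact: sqmod_diff.
Qed.

Lemma ufun_cont (a : 'I_n.+1 -> R) : continuous (ufun a).
Proof. by move=> p; apply: differentiable_continuous; exact: ufun_diff. Qed.

Lemma sqmod_cont j : continuous (fun q : V => sqmod q j).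
Proof. by move=> p; apply: differentiable_continuous; exact: sqmod_diff. Qed.

End S.

Section S.
Variables (R : realType) (W : normedModType R).

Lemma half_derive (t : R) : is_derive t (1:R) (fun s : R => s / 2) (2^-1).
Proof. apply: is_derive_affine => h; rewrite /GRing.scale /=; ring. Qed.

Lemma k_diff (t : R) : differentiable (fun s : R => expR (s / 2)) t.
Proof.
apply: (@differentiable_comp _ _ _ _ (fun s : R => s / 2) expR).
  by apply/derivable1_diffP; have [] := half_derive t.
by apply/derivable1_diffP; have [] := is_derive_expR (t / 2).
Qed.

Lemma k_derive1 (t : R) : derive1 (fun s : R => expR (s / 2)) t = expR (t / 2) * 2^-1.
Proof.
rewrite (_ : (fun s : R => expR (s / 2)) = expR \o (fun s : R => s / 2)) //.
rewrite derive1_comp.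
- rewrite !derive1E; have [_ ->] := half_derive t.
  by have [_ ->] := is_derive_expR (t / 2).
- by have [] := half_derive t.
- by have [] := is_derive_expR (t / 2).
Qed.

Lemma flow_derive (p : W) (t : R) :
  is_derive t (1:R) (fun s : R => expR (s / 2) *: p) (2^-1 *: (expR (t / 2) *: p)).
Proof.
have dk := k_diff t.
have df : differentiable (fun s : R => expR (s / 2) *: p) t by apply: differentiableZl.
apply: DeriveDef; first exact: diff_derivable.
rewrite deriveE // diffZl // -derive1E' // k_derive1 scalerA mulrC //.
Qed.

End S.

Section S.
Variables (R : realType) (n : nat).
Local Notation V := (Cn1 R n).

Lemma open_lt_fun (f g : V -> R) : (forall p, differentiable f p) ->
  (forall p, differentiable g p) -> open [set p | f p < g p].
Proof.
move=> df dg.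
rewrite (_ : [set p | f p < g p] = (fun p => g p - f p) @^-1` [set x | 0 < x]).
  apply: open_comp; last exact: open_gt.
  by move=> p _; apply: differentiable_continuous; apply: differentiableB.
by apply/seteqP; split => p /=; rewrite subr_gt0.
Qed.

Lemma closed_le_fun (f g : V -> R) : (forall p, differentiable f p) ->
  (forall p, differentiable g p) -> closed [set p | f p <= g p].
Proof.
move=> df dg.
rewrite (_ : [set p | f p <= g p] = (fun p => g p - f p) @^-1` [set x | 0 <= x]).
  apply: closed_comp; last exact: closed_ge.
  by move=> p _; apply: differentiable_continuous; apply: differentiableB.
by apply/seteqP; split => p /=; rewrite subr_ge0.
Qed.

Variables (a : 'I_n.+1 -> R) (eps beta : R).
Hypotheses (ha : forall j, 0 < a j) (he : 0 < eps) (he1 : eps < 1) (hb : 1 < beta).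

Local Notation A := (a ord_max).
Local Notation u := (ufun a).
Local Notation P := (fun q : V => pi * sqmod q ord_max).

Lemma EHP (p : V) : EH a eps beta p <->
  (P p < A * (eps + beta * u p) /\ P p < A * (1 - u p)).
Proof.
rewrite /EH /Hfun /=; split.
  by move=> [_]; rewrite lt_min => /andP.
move=> [h1 h2]; split; last by rewrite lt_min h1 h2.
have hP : 0 <= P p by apply: mulr_ge0; [exact: pi_ge0 | exact: sqmod_ge0].
have hA := ha ord_max.
nra.
Qed.

Lemma EH_open : open (EH a eps beta).
Proof.
rewrite (_ : EH a eps beta = [set p | P p < A * (eps + beta * u p)] `&` [set p | P p < A * (1 - u p)]); last first.
  by apply/seteqP; split => p /EHP.
have dP : forall p, differentiable P p.
  by move=> p; apply: differentiableM; [exact: differentiable_cst | exact: sqmod_diff].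
apply: openI; apply: open_lt_fun => // p.
  apply: differentiableM; first exact: differentiable_cst.
  apply: differentiableD; first exact: differentiable_cst.
  by apply: differentiableM; [exact: differentiable_cst | exact: ufun_diff].
apply: differentiableM; first exact: differentiable_cst.
by apply: differentiableB; [exact: differentiable_cst | exact: ufun_diff].
Qed.

Lemma EH_scale (s : R) (p : V) : 0 < s -> s <= 1 -> EH a eps beta p -> EH a eps beta (s *: p).
Proof.
move=> s0 s1 /EHP [h1 h2]; apply/EHP.
rewrite sqmodZ ufunZ.
have k0 : 0 < s ^+ 2 by rewrite exprn_gt0.
have k1 : s ^+ 2 <= 1 by rewrite expr_le1 // ltW.
move: (s ^+ 2) k0 k1 => k k0 k1.
have hA := ha ord_max.
have hu := @ufun_ge0 R n a p ha.
have hP : 0 <= P p by apply: mulr_ge0; [exact: pi_ge0 | exact: sqmod_ge0].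
rewrite mulrA [pi * k]mulrC -mulrA.
move: (P p) h1 h2 hP => z h1 h2 hP.
move: (u p) h1 h2 hu => w h1 h2 hu.
split.
  have e1 : k * z < k * (A * (eps + beta * w)) by rewrite ltr_pM2l.
  have e3 : 0 <= A * eps * (1 - k) by rewrite mulr_ge0 // ?mulr_ge0 ?subr_ge0 // ltW.
  apply: (lt_le_trans e1); rewrite -subr_ge0.
  by have -> : A * (eps + beta * (k * w)) - k * (A * (eps + beta * w)) = A * eps * (1 - k) by ring.
have e2 : k * z < k * (A * (1 - w)) by rewrite ltr_pM2l.
have e3 : 0 <= A * (1 - k) by rewrite mulr_ge0 // ?subr_ge0 // ltW.
apply: (lt_le_trans e2); rewrite -subr_ge0.
by have -> : A * (1 - k * w) - k * (A * (1 - w)) = A * (1 - k) by ring.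
Qed.

End S.

Section S.
Variables (R : realType) (n : nat).
Local Notation V := (Cn1 R n).
Variables (a : 'I_n.+1 -> R) (eps beta : R).
Hypotheses (ha : forall j, 0 < a j) (he : 0 < eps) (he1 : eps < 1) (hb : 1 < beta).

Local Notation A := (a ord_max).
Local Notation u := (ufun a).
Local Notation P := (fun q : V => pi * sqmod q ord_max).

Definition Kset (k : R) : set V := [set q : V | u q <= k] `&`
  ([set q | P q <= A * (eps * k + beta * u q)] `&` [set q | P q <= A * (k - u q)]).

Lemma dP p : differentiable P p.
Proof. by apply: differentiableM; [exact: differentiable_cst | exact: sqmod_diff]. Qed.

Lemma K_closed k : closed (Kset k).
Proof.
apply: closedI; first by apply: closed_le_fun => p; [exact: ufun_diff | exact: differentiable_cst].
apply: closedI; apply: closed_le_fun => p; try exact: dP.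
  apply: differentiableM; first exact: differentiable_cst.
  apply: differentiableD; first exact: differentiable_cst.
  by apply: differentiableM; [exact: differentiable_cst | exact: ufun_diff].
apply: differentiableM; first exact: differentiable_cst.
by apply: differentiableB; [exact: differentiable_cst | exact: ufun_diff].
Qed.

Lemma img_sub (s : R) (p : V) : 0 < s -> EH a eps beta p -> Kset (s ^+ 2) (s *: p).
Proof.
move=> s0 /(@EHP R n a eps beta ha) [h1 h2].
rewrite /Kset /= sqmodZ ufunZ.
have k0 : 0 < s ^+ 2 by rewrite exprn_gt0.
move: (s ^+ 2) k0 => k k0.
have hA := ha ord_max.
have hu := @ufun_ge0 R n a p ha.
have hP : 0 <= P p by apply: mulr_ge0; [exact: pi_ge0 | exact: sqmod_ge0].
rewrite mulrA [pi * k]mulrC -mulrA.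
move: (P p) h1 h2 hP => z h1 h2 hP.
move: (u p) h1 h2 hu => w h1 h2 hu.
have hw : w <= 1.
  have : 0 < A * (1 - w) by apply: le_lt_trans h2.
  by rewrite pmulr_rgt0 // subr_gt0 => /ltW.
split; first by rewrite ger_pMr.
split.
  have e1 : k * z <= k * (A * (eps + beta * w)) by rewrite ler_pM2l // ltW.
  apply: (le_trans e1); rewrite le_eqVlt; apply/orP; left; apply/eqP; ring.
have e1 : k * z <= k * (A * (1 - w)) by rewrite ler_pM2l // ltW.
apply: (le_trans e1); rewrite le_eqVlt; apply/orP; left; apply/eqP; ring.
Qed.

Lemma K_sub (k : R) : k < 1 -> Kset k `<=` EH a eps beta.
Proof.
move=> k1 q [/= h0 [/= h1 h2]]; apply/(@EHP R n a eps beta ha).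
have hA := ha ord_max.
split.
  apply: (le_lt_trans h1); rewrite ltr_pM2l // ltrD2r.
  by rewrite gtr_pMr.
by apply: (le_lt_trans h2); rewrite ltr_pM2l // ltrD2r.
Qed.

End S.

Section S.
Variables (R : realType) (n : nat).
Local Notation V := (Cn1 R n).
Variables (a : 'I_n.+1 -> R) (eps beta : R).
Hypotheses (ha : forall j, 0 < a j) (he : 0 < eps) (he1 : eps < 1) (hb : 1 < beta).

Local Notation A := (a ord_max).
Local Notation u := (ufun a).
Local Notation P := (fun q : V => pi * sqmod q ord_max).

Definition Mb := 1 + \sum_(j < n.+1) a j / pi.

Definition Box : set V :=
  [set v : 'rV[R]_n.+1 | forall i, `[- Mb, Mb]%classic (v ord0 i)] `*`
  [set v : 'rV[R]_n.+1 | forall i, `[- Mb, Mb]%classic (v ord0 i)].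

Lemma Box_compact : compact Box.
Proof.
apply: compact_setX; apply: (@rV_compact _ _ (fun _ => `[- Mb, Mb]%classic)) => i;
exact: segment_compact.
Qed.

Lemma sq_bound (x S : R) : 0 <= S -> x ^+ 2 <= S -> `[- (1 + S), 1 + S]%classic x.
Proof.
move=> S0 hx; rewrite /= in_itv /=; apply/andP; split; nra.
Qed.

Lemma K_box k : k <= 1 -> @Kset R n a eps beta k `<=` Box.
Proof.
move=> k1 q [/= h0 [/= h1 h2]].
have hA := ha ord_max.
have hu := @ufun_ge0 R n a q ha.
have pi0 : 0 < pi :> R by exact: pi_gt0.
have hs : forall j, sqmod q j <= a j / pi.
  move=> j; rewrite ler_pdivlMr // mulrC.
  case: (ltnP j n) => jn.
    have := @ufun_term R n a q j ha jn.
    rewrite ler_pdivrMr // => h; apply: (le_trans h).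
    by rewrite -{2}[a j]mul1r ler_pM2r // (le_trans h0).
  have -> : j = ord_max by apply/val_inj => /=; have := ltn_ord j; lia.
  apply: (le_trans h2); rewrite -{2}[A]mulr1 ler_pM2l //.
  by rewrite lerBlDr (le_trans k1) // lerDl.
have S0 : 0 <= \sum_(j < n.+1) a j / pi.
  by apply: sumr_ge0 => j _; rewrite divr_ge0 // ltW.
have hS : forall j, a j / pi <= \sum_(j < n.+1) a j / pi.
  move=> j; rewrite (bigD1 j) //= lerDl; apply: sumr_ge0 => i _.
  by rewrite divr_ge0 // ltW.
split => i /=; apply: sq_bound => //; apply: le_trans (hS i);
  apply: le_trans (hs i); rewrite /sqmod.
  by rewrite lerDl sqr_ge0.
by rewrite lerDr sqr_ge0.
Qed.

End S.

Lemma lam_scalel (R : realType) (n : nat) (c : R) (v x : Cn1 R n) :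
  lambda0 (c *: v) x = c * lambda0 v x.
Proof.
rewrite /lambda0 mulrCA; congr (_ * _).
rewrite big_distrr /=; apply: eq_bigr => j _.
rewrite !mxE; ring.
Qed.

Theorem proposition5p1 (R : realType) (n : nat) (a : 'I_n.+1 -> R) (eps beta : R) :
  (forall j, 0 < a j) -> 0 < eps -> eps < 1 -> 1 < beta ->
  open_liouville_domain (EH a eps beta) (@lambda0 R n).
Proof.
move=> ha he he1 hb.
split.
- exact: (@EH_open R n a eps beta ha).
- by move=> p _ c v w; exact: lam_linr.
- by move=> p _ w; exact: lam_diff.
- move=> p _ v hv.
  have := hv (- v.2, v.1).
  have -> : dform (@lambda0 R n) p v (- v.2, v.1) =
      \sum_(j < n.+1) (v.1 ord0 j ^+ 2 + v.2 ord0 j ^+ 2).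
    rewrite dform_lam lam_anti /lambda0 /=.
    have -> : \sum_(j < n.+1) ((- v.2) ord0 j * v.2 ord0 j - v.1 ord0 j * v.1 ord0 j)
       = - \sum_(j < n.+1) (v.1 ord0 j ^+ 2 + v.2 ord0 j ^+ 2).
      by rewrite -sumrN; apply: eq_bigr => j _; rewrite !mxE; ring.
    by field.
  move/eqP; rewrite psumr_eq0; last by move=> j _; rewrite addr_ge0 // sqr_ge0.
  move/allP => h0.
  have hj : forall j, v.1 ord0 j = 0 /\ v.2 ord0 j = 0.
    move=> j; have := h0 j (mem_index_enum j); rewrite /= paddr_eq0 ?sqr_ge0 //.
    by rewrite !sqrf_eq0 => /andP [/eqP -> /eqP ->].
  case: v hv h0 hj => x y _ _ hj /=.
  congr pair; apply/matrixP => i j; rewrite ord1 !mxE; by have [] := hj j.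
- exists (fun p => 2^-1 *: p); split.
    move=> p _ w; rewrite dform_lam (@lam_anti R n (2^-1 *: p) w) lam_scalel opprK.
    by field.
  exists (fun t p => expR (t / 2) *: p); split.
    move=> p hp; split; first by rewrite mul0r expR0 scale1r.
    have hc : {for 0, continuous (fun t : R => expR (t / 2) *: p)}.
      by apply: differentiable_continuous; apply: differentiableZl; exact: k_diff.
    have hn : nbhs (expR (0 / 2) *: p) (EH a eps beta).
      rewrite mul0r expR0 scale1r; apply: open_nbhs_nbhs; split => //.
      exact: (@EH_open R n a eps beta ha).
    have /nbhs_ballP [e e0 he'] := hc _ hn.
    exists e => // t tlt; split; last exact: flow_derive.
    case: (leP t 0) => t0.
      apply: (@EH_scale R n a eps beta ha) => //; first exact: expR_gt0.
      by rewrite expR_le1; lra.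
    apply: he'; rewrite /ball /= sub0r normrN gtr0_norm //.
  move=> t t0.
  have s0 : 0 < expR (t / 2) by exact: expR_gt0.
  have s1 : expR (t / 2) < 1 by rewrite expR_lt1; lra.
  move: (expR (t / 2)) s0 s1 => s s0 s1.
  have sub1 : (fun p => s *: p) @` EH a eps beta `<=` @Kset R n a eps beta (s ^+ 2).
    by move=> _ [p hp <-]; exact: img_sub.
  have Kc := @K_closed R n a eps beta.
  have cl : closure ((fun p => s *: p) @` EH a eps beta) `<=` @Kset R n a eps beta (s ^+ 2).
    move: (closure_subset sub1); by rewrite -(proj1 (closure_id _) (Kc _)).
  have sk : s ^+ 2 < 1 by rewrite expr_lt1 // ltW.
  split.
    apply: (@subclosed_compact _ _ (@Box R n a)); first exact: closed_closure.
      exact: (@Box_compact R n a).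
    move=> q hq0; have hq := cl q hq0; exact: (@K_box R n a eps beta ha he he1 hb (s ^+ 2) (ltW sk) q hq).
  move=> q hq0; have hq := cl q hq0; exact: (@K_sub R n a eps beta ha he (s ^+ 2) sk q hq).
Qed.
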